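(* Let $S_X,S_Y$ be finite nonempty action sets, $\varphi:S_X\times S_Y\to\mathbb{R}$ and $\lambda\in[0,1]$. If there exists a $(\varphi,\lambda)$-autocratic behavioral strategy for $X$, then for every $\lambda^*\in[\lambda,1]$ there exists a two-point reactive learning strategy for $X$ that is $(\varphi,\lambda^* )$-autocratic.
   Context: Two players $X,Y$ play a repeated game with finite action sets $S_X,S_Y$; $\Delta(S)$ denotes the probability distributions on $S$. $\varphi(\tau_X,s_Y)=\mathbb{E}_{s_X\sim\tau_X}[\varphi(s_X,s_Y)]$. Histories: $\mathcal{H}=\bigcup_{T\ge0}(S_X\times S_Y)^T$; behavioral strategies are maps $\sigma:\mathcal{H}\to\Delta(S)$; players independently draw actions each round from their strategies evaluated at the history of realized action pairs, with $\mathbb{E}_{\sigma_X,\sigma_Y}$ the expectation over the resulting play. For $\lambda\in[0,1)$, $\sigma_X$ is $(\varphi,\lambda)$-autocratic if for every behavioral strategy $\sigma_Y$ of $Y$, $\mathbb{E}_{\sigma_X,\sigma_Y}\big[(1-\lambda)\sum_{t\ge0}\lambda^t\varphi(s_X^t,s_Y^t)\big]=0$; $\sigma_X$ is $(\varphi,1)$-autocratic if for every behavioral strategy $\sigma_Y$ of $Y$ the limit $\lim_{T\to\infty}\frac1{T+1}\sum_{t=0}^T\mathbb{E}_{\sigma_X,\sigma_Y}[\varphi(s_X^t,s_Y^t)]$ exists and equals $0$. A reactive learning strategy $(\sigma_X^0,\sigma_X^* )$, $\sigma_X^0\in\Delta(S_X)$, $\sigma_X^*:\Delta(S_X)\times S_Y\to\Delta(S_X)$,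 plays $\tau_X^0=\sigma_X^0$ in round $0$ and $\tau_X^{t+1}=\sigma_X^*[\tau_X^t,s_Y^t]$ in round $t+1$ ($s_Y^t$ being $Y$'s realized action in round $t$). It is two-point if there exist $\tau_X^\pm\in\Delta(S_X)$, $p_0\in[0,1]$, $p^*:[0,1]\times S_Y\to[0,1]$ with $\sigma_X^0=p_0\tau_X^++(1-p_0)\tau_X^-$ and $\sigma_X^*[p\tau_X^++(1-p)\tau_X^-,s_Y]=p^*[p,s_Y]\tau_X^++(1-p^*[p,s_Y])\tau_X^-$ for all $p\in[0,1]$, $s_Y\in S_Y$. *)

(* Defs.v *)
From HB Require Import structures.
From mathcomp Require Import all_boot all_order all_algebra.
From mathcomp Require Import all_classical all_reals all_analysis.
Set Implicit Arguments. Unset Strict Implicit. Unset Printing Implicit Defensive.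
Import Order.TTheory GRing.Theory Num.Theory.
Import numFieldTopology.Exports numFieldNormedType.Exports.
Local Open Scope classical_set_scope.
Local Open Scope ring_scope.

Record dist (R : realType) (S : finType) := Dist {
  pmf :> S -> R;
  pmf_ge0 : forall s, 0 <= pmf s;
  pmf_sum1 : \sum_(s : S) pmf s = 1 }.

Section Game.
Variables (R : realType) (SX SY : finType).

(* histories are finite sequences of realized action pairs, oldest first *)
Definition history := seq (SX * SY).

Definition stratX := history -> dist R SX.
Definition stratY := history -> dist R SY.

Fixpoint hist_prob_aux (sX : stratX) (sY : stratY) (past future : history) : R :=
  match future with
  | [::] => 1
  | (a, b) :: f => sX past a * sY past b * hist_prob_aux sX sY (rcons past (a, b)) f
  end.

(* probability that the history after round t-1 is h (size h = t) *)
Definition hist_prob sX sY (h : history) := hist_prob_aux sX sY [::] h.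

Definition exp_payoff (phi : SX -> SY -> R) (sX : stratX) (sY : stratY) (t : nat) : R :=
  \sum_(h : t.-tuple (SX * SY))
     hist_prob sX sY (val h) *
     \sum_(a : SX) \sum_(b : SY) sX (val h) a * sY (val h) b * phi a b.

(* For lambda < 1 the expectation of the
   (bounded, absolutely convergent) discounted sum is the series of the
   per-round expectations; for lambda = 1 the Cesaro definition. *)
Definition autocratic (phi : SX -> SY -> R) (lambda : R) (sX : stratX) : Prop :=
  forall sY : stratY,
    if lambda < 1 then
      (fun n => \sum_(t < n) (1 - lambda) * lambda ^+ t * exp_payoff phi sX sY t)
        @ \oo --> (0 : R^o)
    else
      (fun T => (T.+1)%:R^-1 * \sum_(t < T.+1) exp_payoff phi sX sY t)
        @ \oo --> (0 : R^o).

Definition reactive (s0 : dist R SX) (sstar : dist R SX -> SY -> dist R SX) : stratX :=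
  fun h => foldl (fun tau p => sstar tau p.2) s0 h.

Definition two_point (s0 : dist R SX) (sstar : dist R SX -> SY -> dist R SX) : Prop :=
  exists (tp tm : dist R SX) (p0 : R) (pstar : R -> SY -> R),
    [/\ 0 <= p0 <= 1,
        (forall p s, 0 <= p <= 1 -> 0 <= pstar p s <= 1),
        (forall a, s0 a = p0 * tp a + (1 - p0) * tm a) &
        (forall (p : R) (s : SY) (d : dist R SX), 0 <= p <= 1 ->
           (forall a, d a = p * tp a + (1 - p) * tm a) ->
           forall a, sstar d s a = pstar p s * tp a + (1 - pstar p s) * tm a)].

End Game.

(* Main.v *)
Require Import Defs.
From HB Require Import structures.
From mathcomp Require Import all_boot all_order all_algebra.
From mathcomp Require Import all_classical all_reals all_analysis.
From mathcomp Require Import ring lra.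
Import Order.TTheory GRing.Theory Num.Theory.
Import numFieldTopology.Exports numFieldNormedType.Exports.
Import ArrowAsProduct.
Set Implicit Arguments. Unset Strict Implicit. Unset Printing Implicit Defensive.
Local Open Scope classical_set_scope.
Local Open Scope ring_scope.

Notation dge0 := Defs.pmf_ge0.
Notation dsum1 := Defs.pmf_sum1.
Section Basics.
Variables (R : realType).

Definition Ed (T : finType) (d : dist R T) (f : T -> R) := \sum_x d x * f x.

Lemma Ed_cst (T : finType) (d : dist R T) k : Ed d (fun _ => k) = k.
Proof. by rewrite /Ed -mulr_suml dsum1 mul1r. Qed.

Lemma Ed_le (T : finType) (d : dist R T) f g :
  (forall x, f x <= g x) -> Ed d f <= Ed d g.
Proof. by move=> H; apply: ler_sum => x _; apply: ler_wpM2l; [exact: dge0|exact: H]. Qed.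

Lemma Ed_lin (T : finType) (d : dist R T) k1 k2 f g :
  Ed d (fun x => k1 * f x + k2 * g x) = k1 * Ed d f + k2 * Ed d g.
Proof.
rewrite /Ed !mulr_sumr -big_split /=; apply: eq_bigr => x _; ring.
Qed.

Lemma Ed_ext (T : finType) (d : dist R T) f g :
  (forall x, f x = g x) -> Ed d f = Ed d g.
Proof. by move=> H; apply: eq_bigr => x _; rewrite H. Qed.

Lemma Ed_norm (T : finType) (d : dist R T) f K :
  (forall x, `|f x| <= K) -> `|Ed d f| <= K.
Proof.
move=> H; rewrite -[leRHS](Ed_cst d K).
apply: le_trans (ler_norm_sum _ _ _) _; apply: ler_sum => x _.
rewrite normrM ger0_norm ?dge0 //; apply: ler_wpM2l; [exact: dge0|exact: H].
Qed.

Lemma Ed_bnd (T : finType) (d : dist R T) f lo hi :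
  (forall x, lo <= f x <= hi) -> lo <= Ed d f <= hi.
Proof.
move=> H; apply/andP; split.
- by rewrite -[leLHS](Ed_cst d lo); apply: Ed_le => x; case/andP: (H x).
- by rewrite -[leRHS](Ed_cst d hi); apply: Ed_le => x; case/andP: (H x).
Qed.

Definition diracf (T : finType) (y : T) : T -> R := fun b => (b == y)%:R.
Lemma dirac_ge0 (T : finType) (y : T) b : 0 <= diracf y b.
Proof. by rewrite /diracf ler0n. Qed.
Lemma dirac_sum1 (T : finType) (y : T) : \sum_b diracf y b = 1.
Proof.
rewrite (bigD1 y) //= /diracf eqxx big1 ?addr0 // => b /negbTE ->; by [].
Qed.
Definition dirac (T : finType) (y : T) : dist R T := Dist (dirac_ge0 y) (dirac_sum1 y).

Lemma Ed_dirac (T : finType) (y : T) f : Ed (dirac y) f = f y.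
Proof.
rewrite /Ed (bigD1 y) //= /diracf eqxx mul1r big1 ?addr0 // => b /negbTE ->.
by rewrite mul0r.
Qed.

Lemma Ed_swap (T1 T2 : finType) (d1 : dist R T1) (d2 : dist R T2) F :
  Ed d1 (fun a => Ed d2 (fun b => F a b)) = Ed d2 (fun b => Ed d1 (fun a => F a b)).
Proof.
rewrite /Ed; under eq_bigr do rewrite mulr_sumr.
rewrite exchange_big /=; apply: eq_bigr => b _; rewrite mulr_sumr.
by apply: eq_bigr => a _; ring.
Qed.

End Basics.
Unset Implicit Arguments.
Section C1.
Variables (R : realType) (SX SY : finType).

Lemma pmf_le1 (t : dist R SX) x : t x <= 1.
Proof.
rewrite -(dsum1 t) (bigD1 x) //= lerDl; apply: sumr_ge0 => i _; exact: dge0.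
Qed.

Lemma lin_cont (g : SX -> R) (p : SX -> R^o) :
  (fun f : SX -> R^o => \sum_x f x * g x) @ p --> \sum_x p x * g x.
Proof.
apply: (@cvg_big _ _ +%R 0 xpredT add_continuous).
  exact: nbhs_filter.
move=> x _; apply: cvgMr_tmp; first exact: nbhs_filter.
exact: (@proj_continuous SX (fun _ => R^o) x p).
Qed.

Lemma C1 (phi : SX -> SY -> R) (L U : SY -> R) :
  (forall e : R, 0 < e -> exists t : dist R SX, forall y,
      L y - e <= \sum_x t x * phi x y <= U y) ->
  exists t : dist R SX, forall y, L y <= \sum_x t x * phi x y <= U y.
Proof.
move=> H.
have H' : forall n : nat, exists t : dist R SX, forall y,
   L y - n.+1%:R^-1 <= \sum_x t x * phi x y <= U y.
  by move=> n; apply: H; rewrite invr_gt0 ltr0n.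
case: (choice H') => tn Htn.
pose A := [set f : SX -> R^o | forall i, `[(0:R), 1]%classic (f i)].
have cA : compact A := tychonoff (fun _ => @segment_compact R 0 1).
pose F := (fun n => (tn n : SX -> R^o)) @ \oo.
have FA : F A.
  by exists 0%N => // n _ i /=; rewrite in_itv /= dge0 pmf_le1.
have [p [Ap clp]] := cA F _ FA.
have approx : forall (g : SX -> R) (B : set (SX -> R^o)) e, 0 < e -> F B ->
    exists2 f, B f & `|\sum_x p x * g x - \sum_x f x * g x| < e.
  move=> g B e e0 FB.
  have Nb : nbhs p [set f : SX -> R^o | `|\sum_x p x * g x - \sum_x f x * g x| < e].
    have := @cvgr_dist_lt _ _ _ _ (nbhs_filter p) _ _ (lin_cont g p) e e0. exact.
  have [f [Bf Nf]] := clp B _ FB Nb.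
  by exists f.
have approx2 : forall (g : SX -> R) e N, 0 < e ->
    exists2 n, (N <= n)%N & `|\sum_x p x * g x - \sum_x tn n x * g x| < e.
  move=> g e N e0.
  have FB : F [set f : SX -> R^o | exists2 n, (N <= n)%N & f = tn n].
    by exists N => // n Nn; exists n.
  have [f [n Nn ->] H2] := approx g _ e e0 FB.
  by exists n.
have sum1 : \sum_x p x = 1.
  have E : forall (q : SX -> R), \sum_x q x * 1 = \sum_x q x.
    by move=> q; apply: eq_bigr => x _; rewrite mulr1.
  apply/eqP; rewrite eq_le; apply/andP; split.
  - apply/ler_addgt0Pr => e e0.
    have [n _] := approx2 (fun _ => 1) e 0%N e0.
    rewrite !E dsum1 => /ltW; rewrite ler_distl; lra.
  - apply/ler_addgt0Pr => e e0.
    have [n _] := approx2 (fun _ => 1) e 0%N e0.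
    rewrite !E dsum1 => /ltW; rewrite ler_distl; lra.
have p0 : forall x, 0 <= p x.
  by move=> x; have := Ap x; rewrite /= in_itv /= => /andP[].
exists (Dist p0 sum1) => y /=; apply/andP; split.
- apply/ler_addgt0Pr => e e0.
  have e2 : 0 < e / 2 by rewrite divr_gt0.
  have [N _ HN] := near_infty_natSinv_lt (PosNum e2).
  have [n Nn] := approx2 (fun x => phi x y) (e / 2) N e2.
  have := HN n Nn; have /andP[h1 _] := Htn n y; rewrite /= => h2.
  rewrite ltr_distl => /andP[h3 h4]. move: (\sum_x tn n x * phi x y) (\sum_x p x * phi x y) h1 h3 h4 => a b h1 h3 h4; move: (n.+1%:R^-1) h1 h2 => c h1 h2. lra.
- apply/ler_addgt0Pr => e e0.
  have [n Nn] := approx2 (fun x => phi x y) e 0%N e0.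
  have /andP[_ h1] := Htn n y.
  rewrite ltr_distl => /andP[h3 h4]. lra.
Qed.
End C1.
Set Implicit Arguments.
Section Game.
Variables (R : realType) (SX SY : finType).
Local Notation stX := (stratX R SX SY).
Local Notation stY := (stratY R SX SY).
Local Notation hist := (history SX SY).

Definition E2 (sX : stX) (sY : stY) (g : hist) (F : SX -> SY -> R) :=
  Ed (sX g) (fun a => Ed (sY g) (fun b => F a b)).

Lemma E2E sX sY g F :
  E2 sX sY g F = \sum_a \sum_b sX g a * sY g b * F a b.
Proof.
rewrite /E2 /Ed; apply: eq_bigr => a _; rewrite mulr_sumr.
by apply: eq_bigr => b _; rewrite mulrA.
Qed.

Lemma E2_cst sX sY g k : E2 sX sY g (fun _ _ => k) = k.
Proof. by rewrite /E2 (Ed_ext _ (fun a => Ed_cst _ k)) Ed_cst. Qed.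

Lemma E2_le sX sY g F G : (forall a b, F a b <= G a b) -> E2 sX sY g F <= E2 sX sY g G.
Proof. by move=> H; apply: Ed_le => a; apply: Ed_le => b; exact: H. Qed.

Lemma E2_lin sX sY g k1 k2 F G :
  E2 sX sY g (fun a b => k1 * F a b + k2 * G a b) = k1 * E2 sX sY g F + k2 * E2 sX sY g G.
Proof. by rewrite /E2 -Ed_lin; apply: Ed_ext => a; rewrite Ed_lin. Qed.

Lemma E2_ext sX sY g F G : (forall a b, F a b = G a b) -> E2 sX sY g F = E2 sX sY g G.
Proof. by move=> H; apply: Ed_ext => a; apply: Ed_ext => b; exact: H. Qed.

Lemma E2_norm sX sY g F K : (forall a b, `|F a b| <= K) -> `|E2 sX sY g F| <= K.
Proof.
move=> H; apply: Ed_norm => a; apply: Ed_norm => b; exact: H.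
Qed.

Lemma E2_bnd sX sY g F lo hi : (forall a b, lo <= F a b <= hi) -> lo <= E2 sX sY g F <= hi.
Proof.
move=> H; apply: Ed_bnd => a; apply: Ed_bnd => b; exact: H.
Qed.

Fixpoint Cr (phi : SX -> SY -> R) (sX : stX) (sY : stY) (g : hist) (t : nat) : R :=
  match t with
  | 0 => E2 sX sY g phi
  | t'.+1 => E2 sX sY g (fun a b => Cr phi sX sY (rcons g (a, b)) t')
  end.

Lemma tuple_sumS (T : finType) t (F : seq T -> R) :
  \sum_(h : t.+1.-tuple T) F h = \sum_(z : T) \sum_(h : t.-tuple T) F (z :: h).
Proof.
rewrite pair_big /=.
rewrite (reindex (fun p : T * t.-tuple T => [tuple of p.1 :: p.2])) /=; last first.
  exists (fun h : t.+1.-tuple T => (thead h, [tuple of behead h])).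
    by move=> [z h] _ /=; congr pair; apply: val_inj.
  by move=> h _; rewrite [RHS]tuple_eta; apply: val_inj.
by [].
Qed.

Lemma exp_payoff_gen phi sX sY t g :
  \sum_(h : t.-tuple (SX * SY)) hist_prob_aux sX sY g (val h) *
     (\sum_a \sum_b sX (g ++ val h) a * sY (g ++ val h) b * phi a b)
  = Cr phi sX sY g t.
Proof.
elim: t g => [|t IH] g.
  rewrite (big_pred1 [tuple]) => [|h]; last by rewrite [h]tuple0 /= eqxx.
  by rewrite /= cats0 mul1r E2E.
rewrite (tuple_sumS t (fun h => hist_prob_aux sX sY g h *
  (\sum_a \sum_b sX (g ++ h) a * sY (g ++ h) b * phi a b))) /= E2E [in RHS]pair_big /=; apply: eq_bigr => [[a b]] _ /=.
rewrite -(IH (rcons g (a, b))) mulr_sumr; apply: eq_bigr => h _.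
by rewrite cat_rcons mulrA.
Qed.

Lemma exp_payoffE phi sX sY t : exp_payoff phi sX sY t = Cr phi sX sY [::] t.
Proof. exact: (exp_payoff_gen phi sX sY t [::]). Qed.

End Game.
Section Sums.
Variables (R : realType) (SX SY : finType).
Local Notation stX := (stratX R SX SY).
Local Notation stY := (stratY R SX SY).
Local Notation hist := (history SX SY).

Lemma Ed_sum (T : finType) (d : dist R T) n (F : 'I_n -> T -> R) :
  Ed d (fun x => \sum_(i < n) F i x) = \sum_(i < n) Ed d (F i).
Proof.
rewrite /Ed; under eq_bigr do rewrite mulr_sumr.
by rewrite exchange_big.
Qed.

Lemma Ed_scale (T : finType) (d : dist R T) k f :
  Ed d (fun x => k * f x) = k * Ed d f.
Proof. by rewrite /Ed mulr_sumr; apply: eq_bigr => x _; ring. Qed.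

Lemma E2_sum (sX : stX) (sY : stY) g n (F : 'I_n -> SX -> SY -> R) :
  E2 sX sY g (fun a b => \sum_(i < n) F i a b) = \sum_(i < n) E2 sX sY g (F i).
Proof.
rewrite /E2 -Ed_sum; apply: Ed_ext => a; exact: Ed_sum.
Qed.

Lemma E2_scale (sX : stX) (sY : stY) g (k : R) (F : SX -> SY -> R) :
  E2 sX sY g (fun a b => k * F a b) = k * E2 sX sY g F.
Proof.
rewrite /E2 -Ed_scale; apply: Ed_ext => a; exact: Ed_scale.
Qed.

Fixpoint Sr (phi : SX -> SY -> R) (c l : R) (sX : stX) (sY : stY) (g : hist) (n : nat) : R :=
  match n with
  | 0 => 0
  | n'.+1 => c * E2 sX sY g phi +
             l * E2 sX sY g (fun a b => Sr phi c l sX sY (rcons g (a, b)) n')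
  end.

Lemma SrE phi c l sX sY n g :
  \sum_(t < n) c * l ^+ t * Cr phi sX sY g t = Sr phi c l sX sY g n.
Proof.
elim: n g => [|n IH] g; first by rewrite big_ord0.
rewrite big_ord_recl /= expr0 mulr1; congr (_ + _).
under E2_ext => a b do rewrite -IH.
rewrite E2_sum mulr_sumr.
apply: eq_bigr => i _; rewrite E2_scale /= exprS; ring.
Qed.

Lemma Sr_local phi c l sX sY1 sY2 g n :
  (forall f, sY1 (g ++ f) = sY2 (g ++ f)) ->
  Sr phi c l sX sY1 g n = Sr phi c l sX sY2 g n.
Proof.
elim: n g => [|n IH] g H //=.
have e : sY1 g = sY2 g by have := H [::]; rewrite cats0.
rewrite /E2 e; congr (_ + _ * _); apply: Ed_ext => a; apply: Ed_ext => b.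
by apply: IH => f; rewrite cat_rcons.
Qed.

Definition Kphi (phi : SX -> SY -> R) := \sum_a \sum_b `|phi a b|.

Lemma phi_le_K phi a b : `|phi a b| <= Kphi phi.
Proof.
rewrite /Kphi (bigD1 a) //= (bigD1 b) //= -addrA lerDl.
apply: addr_ge0; first by apply: sumr_ge0.
by apply: sumr_ge0 => i _; apply: sumr_ge0.
Qed.

Lemma Kphi_ge0 phi : 0 <= Kphi phi.
Proof. by rewrite /Kphi; apply: sumr_ge0 => i _; apply: sumr_ge0. Qed.

Lemma Cr_bnd phi sX sY g t : `|Cr phi sX sY g t| <= Kphi phi.
Proof.
elim: t g => [|t IH] g /=; apply: E2_norm => a b //; exact: phi_le_K.
Qed.

Lemma Sr_bnd phi l sX sY g n : 0 <= l <= 1 ->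
  `|Sr phi (1 - l) l sX sY g n| <= Kphi phi.
Proof.
move=> /andP[l0 l1]; elim: n g => [|n IH] g /=; first by rewrite normr0 Kphi_ge0.
apply: le_trans (ler_normD _ _) _.
rewrite !normrM (ger0_norm l0) ger0_norm ?subr_ge0 //.
have h1 : `|E2 sX sY g phi| <= Kphi phi by apply: E2_norm => a b; exact: phi_le_K.
have h2 : `|E2 sX sY g (fun a b => Sr phi (1 - l) l sX sY (rcons g (a, b)) n)| <= Kphi phi.
  by apply: E2_norm => a b; exact: IH.
have hc : 0 <= 1 - l by rewrite subr_ge0.
have := ler_wpM2l hc h1; have := ler_wpM2l l0 h2. lra.
Qed.

Lemma Sr_diff phi c l sX sY g n :
  Sr phi c l sX sY g n.+1 - Sr phi c l sX sY g n = c * l ^+ n * Cr phi sX sY g n.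
Proof. by rewrite -!SrE big_ord_recr /= addrAC subrr add0r. Qed.

Lemma Sr_cvg phi l sX sY g : 0 <= l < 1 ->
  cvgn (Sr phi (1 - l) l sX sY g).
Proof.
move=> /andP[l0 l1].
set K := Kphi phi.
pose w n := Sr phi (1 - l) l sX sY g n - K * l ^+ n.
have wnd : nondecreasing_seq w.
  apply/nondecreasing_seqP => n; rewrite /w -subr_ge0.
  have -> : Sr phi (1 - l) l sX sY g n.+1 - K * l ^+ n.+1 -
     (Sr phi (1 - l) l sX sY g n - K * l ^+ n) =
     (1 - l) * l ^+ n * (Cr phi sX sY g n + K).
    have := Sr_diff phi (1 - l) l sX sY g n; rewrite exprS => h.
    move: h; set a := Sr _ _ _ _ _ _ _; set b := Sr _ _ _ _ _ _ _ => h.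
    have -> : a = b + (1 - l) * l ^+ n * Cr phi sX sY g n by rewrite -h; ring.
    ring.
  apply: mulr_ge0; first by apply: mulr_ge0; [rewrite subr_ge0 ltW|exact: exprn_ge0].
  have := Cr_bnd phi sX sY g n; rewrite -/K ler_norml => /andP[h _]. lra.
have wub : has_ubound (range w).
  exists K => _ [n _ <-]; rewrite /w.
  have lb : 0 <= l <= 1 by rewrite l0 ltW.
  have := Sr_bnd phi sX sY g n lb; rewrite -/K ler_norml => /andP[_ h].
  have : 0 <= K * l ^+ n by apply: mulr_ge0; [exact: Kphi_ge0|exact: exprn_ge0].
  lra.
have cw := nondecreasing_cvgn wnd wub.
have ce : (fun n => K * l ^+ n) @ \oo --> K * 0.
  have e1 : (fun n => l ^+ n) @ \oo --> (0:R) by apply: cvg_expr; rewrite ger0_norm.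
  exact: (cvgMl_tmp (a := K) e1).
have : (fun n => w n + K * l ^+ n) @ \oo --> sup (range w) + K * 0 := cvgD cw ce.
have -> : (fun n => w n + K * l ^+ n) = Sr phi (1 - l) l sX sY g.
  by apply: boolp.funext => n; rewrite /w subrK.
by move=> h; apply/cvg_ex; eexists; exact: h.
Qed.

End Sums.
Unset Implicit Arguments.
Section Nec.
Variables (R : realType) (SX SY : finType) (phi : SX -> SY -> R)
  (sX : stratX R SX SY) (lam : R) (y0 : SY).
Hypotheses (l0 : 0 < lam) (l1 : lam < 1).
Hypothesis Hac : forall sY, Sr phi (1 - lam) lam sX sY [::] @ \oo --> (0 : R).
Local Notation stY := (stratY R SX SY).
Local Notation hist := (history SX SY).

Definition W (sY : stY) (g : hist) : R := lim (Sr phi (1 - lam) lam sX sY g @ \oo).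

Lemma lam01 : 0 <= lam < 1.
Proof. by rewrite ltW. Qed.

Lemma lam01' : 0 <= lam <= 1.
Proof. by rewrite !ltW. Qed.

Lemma Wcvg sY g : Sr phi (1 - lam) lam sX sY g @ \oo --> W sY g.
Proof. exact: (Sr_cvg lam01). Qed.

Lemma E2_cvg (sY : stY) g (Fn : nat -> SX -> SY -> R) F :
  (forall a b, (fun n => Fn n a b) @ \oo --> F a b) ->
  (fun n => E2 sX sY g (Fn n)) @ \oo --> E2 sX sY g F.
Proof.
move=> H.
have -> : (fun n => E2 sX sY g (Fn n)) =
   (fun n => \sum_a \sum_b sX g a * sY g b * Fn n a b).
  by apply: boolp.funext => n; rewrite E2E.
rewrite E2E.
apply: (@cvg_big _ _ +%R 0 xpredT add_continuous).
move=> a _; apply: (@cvg_big _ _ +%R 0 xpredT add_continuous).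
move=> b _; apply: (cvgMl_tmp (a := sX g a * sY g b)); exact: H.
Qed.

Lemma Wrec sY g : W sY g = (1 - lam) * E2 sX sY g phi +
   lam * E2 sX sY g (fun a b => W sY (rcons g (a, b))).
Proof.
rewrite /W; apply: cvg_lim; first exact: Rhausdorff.
rewrite -cvg_shiftS /=.
apply: cvgD; first exact: cvg_cst.
apply: (cvgMl_tmp (a := lam)); apply: E2_cvg => a b; exact: Wcvg.
Qed.

Lemma W_local sY1 sY2 g : (forall f, sY1 (g ++ f) = sY2 (g ++ f)) ->
  W sY1 g = W sY2 g.
Proof.
move=> H; rewrite /W.
have -> : Sr phi (1 - lam) lam sX sY1 g = Sr phi (1 - lam) lam sX sY2 g.
  by apply: boolp.funext => n; exact: Sr_local.
by [].
Qed.

Lemma W_bnd sY g : `|W sY g| <= Kphi phi.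
Proof.
rewrite ler_norml; apply/andP; split.
- apply: limr_ge; first exact: (Sr_cvg lam01).
  apply: nearW => n; have := Sr_bnd phi sX sY g n lam01'; rewrite ler_norml.
  by case/andP.
- apply: limr_le; first exact: (Sr_cvg lam01).
  apply: nearW => n; have := Sr_bnd phi sX sY g n lam01'; rewrite ler_norml.
  by case/andP.
Qed.

Lemma W0 sY : W sY [::] = 0.
Proof. exact: cvg_lim (Hac sY). Qed.

Inductive Rch : hist -> Prop :=
  | Rch0 : Rch [::]
  | RchS g a b : Rch g -> 0 < sX g a -> Rch (rcons g (a, b)).

Lemma Wdirac (sY : stY) g y : sY g = dirac R y ->
  W sY g = (1 - lam) * Ed (sX g) (fun a => phi a y) +
           lam * Ed (sX g) (fun a => W sY (rcons g (a, y))).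
Proof.
move=> e; rewrite Wrec /E2 e; congr (_ * _ + _ * _); apply: Ed_ext => a;
  exact: Ed_dirac.
Qed.

Lemma size_ne (g : hist) z f : (rcons g z ++ f == g) = false.
Proof.
apply/eqP => /(congr1 size); rewrite size_cat size_rcons => /eqP.
by rewrite addSn -addnS -{2}[size g]addn0 eqn_add2l.
Qed.

Lemma IND g : Rch g -> forall sY1 sY2, W sY1 g = W sY2 g.
Proof.
elim => [|{}g x y Rg IH px] sY1 sY2; first by rewrite !W0.
set c0 := rcons g (x, y).
pose sY1' : stY := fun k => if k == g then dirac R y else if prefix c0 k then sY1 k else sY2 k.
pose sY2' : stY := fun k => if k == g then dirac R y else sY2 k.
have key := IH sY1' sY2'.
have e1 : sY1' g = dirac R y by rewrite /sY1' eqxx.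
have e2 : sY2' g = dirac R y by rewrite /sY2' eqxx.
rewrite (Wdirac sY1' g y e1) (Wdirac sY2' g y e2) in key.
move/addrI: key => /(mulfI (lt0r_neq0 l0)) key.
have hx : forall a, a != x -> W sY1' (rcons g (a, y)) = W sY2' (rcons g (a, y)).
  move=> a ax; rewrite (@W_local sY1' sY2) ?(@W_local sY2' sY2) // => f.
  - by rewrite /sY2' size_ne.
  - rewrite /sY1' size_ne; case: prefixP => // -[s].
    rewrite /c0 !cat_rcons => /(congr1 (drop (size g))).
    rewrite !drop_size_cat // => -[ea].
    by rewrite ea eqxx in ax.
have h1 : W sY1' c0 = W sY1 c0.
  by apply: W_local => f; rewrite /sY1' size_ne prefix_prefix.
have h2 : W sY2' c0 = W sY2 c0.
  by apply: W_local => f; rewrite /sY2' size_ne.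
move: key; rewrite /Ed (bigD1 x) //= [in RHS](bigD1 x) //=.
have -> : \sum_(i | i != x) sX g i * W sY1' (rcons g (i, y)) =
          \sum_(i | i != x) sX g i * W sY2' (rcons g (i, y)).
  by apply: eq_bigr => a ax; rewrite hx.
move/addIr; rewrite -/c0 h1 h2; apply: mulfI; exact: lt0r_neq0.
Qed.


Definition Y0 : stY := fun _ => dirac R y0.
Definition v h : R := W Y0 h.
Definition Ev := [set r | exists h, Rch h /\ r = v h].

Lemma Ev_has_sup : has_sup Ev.
Proof.
split; first by exists (v [::]), [::]; split => //; exact: Rch0.
exists (Kphi phi) => r [h [_ ->]]; have := W_bnd Y0 h; rewrite ler_norml.
by case/andP.
Qed.

Lemma Ev_has_lbound : has_lbound Ev.
Proof.
exists (- Kphi phi) => r [h [_ ->]]; have := W_bnd Y0 h; rewrite ler_norml.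
by case/andP.
Qed.

Lemma Ev_has_inf : has_inf Ev.
Proof.
split; first by exists (v [::]), [::]; split => //; exact: Rch0.
exact: Ev_has_lbound.
Qed.

Lemma vM h : Rch h -> v h <= sup Ev.
Proof. by move=> Rh; apply: (sup_upper_bound Ev_has_sup); exists h. Qed.

Lemma vm h : Rch h -> inf Ev <= v h.
Proof. by move=> Rh; apply: (ge_inf Ev_has_lbound); exists h. Qed.

Lemma m0M : inf Ev <= 0 <= sup Ev.
Proof.
have <- : v [::] = 0 by exact: W0.
by rewrite vm ?vM //; exact: Rch0.
Qed.

Lemma Ed_le_supp (T : finType) (d : dist R T) f g :
  (forall a, 0 < d a -> f a <= g a) -> Ed d f <= Ed d g.
Proof.
move=> H; apply: ler_sum => a _.
have := dge0 d a; rewrite le0r => /orP[/eqP ->|pa]; first by rewrite !mul0r.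
by apply: ler_wpM2l; [exact: ltW|exact: H].
Qed.

Lemma P1 h y : Rch h ->
  v h - lam * sup Ev <= (1 - lam) * Ed (sX h) (fun a => phi a y) <= v h - lam * inf Ev.
Proof.
move=> Rh.
pose sY : stY := fun k => if k == h then dirac R y else Y0 k.
have e : sY h = dirac R y by rewrite /sY eqxx.
have := Wdirac sY h y e; rewrite (IND h Rh sY Y0) -/(v h).
set S := Ed (sX h) (fun a => W sY _) => vh.
have Sc : forall a, 0 < sX h a -> W sY (rcons h (a, y)) = v (rcons h (a, y)).
  by move=> a pa; apply: IND; apply: RchS.
have SM : S <= sup Ev.
  rewrite -(Ed_cst (sX h) (sup Ev)); apply: Ed_le_supp => a pa /=.
  by rewrite Sc // vM //; apply: RchS.
have Sm : inf Ev <= S.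
  rewrite -(Ed_cst (sX h) (inf Ev)); apply: Ed_le_supp => a pa /=.
  by rewrite Sc // vm //; apply: RchS.
have := ler_wpM2l (ltW l0) SM; have := ler_wpM2l (ltW l0) Sm.
move: vh; set P := Ed (sX h) (fun a => phi a y).
move=> vh h1 h2; apply/andP; split; lra.
Qed.

Lemma nec_main : exists (tp tm : dist R SX) (M m : R), m <= 0 <= M /\
  forall y, [/\ (1 - lam) * M <= (1 - lam) * Ed tp (fun a => phi a y),
     (1 - lam) * Ed tp (fun a => phi a y) <= M - lam * m,
     m - lam * M <= (1 - lam) * Ed tm (fun a => phi a y) &
     (1 - lam) * Ed tm (fun a => phi a y) <= (1 - lam) * m].
Proof.
set M := sup Ev; set m := inf Ev.
have hp : forall e : R, 0 < e -> exists t : dist R SX, forall y,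
    (fun _ => (1 - lam) * M) y - e <= \sum_x t x * (fun a b => (1 - lam) * phi a b) x y
     <= (fun _ => M - lam * m) y.
  move=> e e0; have [r [h [Rh ->]] hr] := sup_adherent e0 Ev_has_sup.
  exists (sX h) => y /=.
  have := P1 h y Rh; rewrite -/M -/m -Ed_scale /Ed => /andP[h1 h2].
  have := vM h Rh; rewrite -/M => h3.
  move: h1 h2 hr h3; rewrite -/M -/m; set P := \sum_x _.
  move: P (v h) M m e lam l0 l1 e0 => P V M' m' e' lam' l0' l1' e0' h1 h2 hr h3.
  apply/andP; split; lra.
have [tp Htp] := @C1 R SX SY _ _ _ hp.
have hm : forall e : R, 0 < e -> exists t : dist R SX, forall y,
    (fun _ => - ((1 - lam) * m)) y - e <= \sum_x t x * (fun a b => - ((1 - lam) * phi a b)) x y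
     <= (fun _ => - (m - lam * M)) y.
  move=> e e0; have [r [h [Rh ->]] hr] := inf_adherent e0 Ev_has_inf.
  exists (sX h) => y /=.
  have := P1 h y Rh; rewrite -/M -/m -Ed_scale /Ed => /andP[h1 h2].
  have := vm h Rh; rewrite -/m => h3.
  have -> : \sum_x sX h x * - ((1 - lam) * phi x y) = - \sum_x sX h x * ((1 - lam) * phi x y).
    by rewrite -sumrN; apply: eq_bigr => x _; rewrite mulrN.
  move: h1 h2 hr h3; rewrite -/M -/m; set P := \sum_x _.
  move=> h1 h2 hr h3.
  apply/andP; split; lra.
have [tm Htm] := @C1 R SX SY _ _ _ hm.
exists tp, tm, M, m; split; first exact: m0M.
move=> y; have /andP[a1 a2] := Htp y; have /andP[b1 b2] := Htm y.
move: a1 a2 b1 b2; rewrite /= -!Ed_scale /Ed.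
have -> : \sum_x tm x * - ((1 - lam) * phi x y) = - \sum_x tm x * ((1 - lam) * phi x y).
  by rewrite -sumrN; apply: eq_bigr => x _; rewrite mulrN.
set P := \sum_x tp x * _; set Q := \sum_x tm x * _ => a1 a2 b1 b2.
split; lra.
Qed.

End Nec.
Section Suff.
Variables (R : realType) (SX SY : finType) (phi : SX -> SY -> R).
Local Notation stY := (stratY R SX SY).
Local Notation hist := (history SX SY).

Definition phit (d : dist R SX) (y : SY) := Ed d (fun a => phi a y).

Lemma reactive_nil (s0 : dist R SX) (sstar : dist R SX -> SY -> dist R SX) : reactive s0 sstar [::] = s0.
Proof. by []. Qed.

Lemma reactive_rcons (s0 : dist R SX) (sstar : dist R SX -> SY -> dist R SX) (h : hist) z :
  reactive s0 sstar (rcons h z) = sstar (reactive s0 sstar h) z.2.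
Proof. by rewrite /reactive foldl_rcons. Qed.

Lemma seq_const0 (u : nat -> R) : (forall n, u n = 0) -> u @ \oo --> (0 : R).
Proof.
move=> H; have -> : u = fun _ => 0 by apply: boolp.funext.
exact: cvg_cst.
Qed.

Lemma zero_suff (tau : dist R SX) (lam' : R) : (forall y, phit tau y = 0) ->
  exists s0 sstar, two_point s0 sstar /\ autocratic phi lam' (reactive s0 sstar).
Proof.
move=> H0; pose ct : dist R SX -> SY -> dist R SX := fun _ _ => tau.
exists tau, ct; split.
  exists tau, tau, 0, (fun _ _ => 0); split.
  - by rewrite lexx ler01.
  - by move=> p s _; rewrite lexx ler01.
  - by move=> a; rewrite mul0r add0r subr0 mul1r.
  - by move=> p s d _ _ a; rewrite mul0r add0r subr0 mul1r.
move=> sY.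
have rt : forall h : hist, reactive tau ct h = tau.
  by move=> h; case: (lastP h) => // h' z; rewrite reactive_rcons.
have C0 : forall g t, Cr phi (reactive tau ct) sY g t = 0.
  move=> g t; elim: t g => [|t IH] g /=.
    rewrite /E2 rt Ed_swap -(Ed_cst (sY g) 0); apply: Ed_ext => b.
    exact: H0.
  by under E2_ext => a b do rewrite IH; rewrite E2_cst.
case: ifP => _; apply: seq_const0 => n.
- by rewrite big1 // => t _; rewrite exp_payoffE C0 mulr0.
- by rewrite big1 ?mulr0 // => t _; rewrite exp_payoffE C0.
Qed.

Definition clamp (p : R) := if (0 <= p) && (p <= 1) then p else 0.
Lemma clamp01 p : 0 <= clamp p <= 1.
Proof. by rewrite /clamp; case: ifP => // _; rewrite lexx ler01. Qed.
Lemma clampE p : 0 <= p <= 1 -> clamp p = p.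
Proof. by rewrite /clamp => ->. Qed.

Section Mix.
Variables (tp tm : dist R SX).

Definition mixf (p : R) (x : SX) := clamp p * tp x + (1 - clamp p) * tm x.
Lemma mix_ge0 p x : 0 <= mixf p x.
Proof.
have /andP[h1 h2] := clamp01 p.
by rewrite /mixf addr_ge0 // mulr_ge0 ?dge0 // subr_ge0.
Qed.
Lemma mix_sum1 p : \sum_x mixf p x = 1.
Proof.
rewrite /mixf big_split /= -!mulr_sumr !dsum1; ring.
Qed.
Definition mixd p : dist R SX := Dist (mix_ge0 p) (mix_sum1 p).

Lemma Ed_mix p f : 0 <= p <= 1 -> Ed (mixd p) f = p * Ed tp f + (1 - p) * Ed tm f.
Proof.
move=> hp; rewrite /Ed /= /mixf clampE // !mulr_sumr -big_split /=.
by apply: eq_bigr => x _; ring.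
Qed.

End Mix.

Lemma frac01 (N D : R) : 0 < D -> 0 <= N <= D -> 0 <= N / D <= 1.
Proof.
move=> D0 /andP[n0 nD]; apply/andP; split; first exact: divr_ge0 n0 (ltW D0).
by rewrite ler_pdivrMr // mul1r.
Qed.

Lemma divbnd (l X lo hi : R) : 0 < l -> l * lo <= X <= l * hi -> lo <= X / l <= hi.
Proof.
move=> l0 /andP[h1 h2]; rewrite ler_pdivlMr // ler_pdivrMr // mulrC h1 /=.
by rewrite mulrC.
Qed.

Section Main.
Variables (tp tm : dist R SX) (x0 : SX) (lam' c A B : R).
Hypotheses (hx0 : tp x0 != tm x0) (l0 : 0 < lam') (l1 : lam' <= 1) (c0 : 0 < c)
  (hc : c = if lam' < 1 then 1 - lam' else 1) (hB : B <= 0) (hA : 0 <= A) (hAB : B < A)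
  (Hp : forall y, (1 - lam') * A <= c * phit tp y <= A - lam' * B)
  (Hm : forall y, B - lam' * A <= c * phit tm y <= (1 - lam') * B).

Definition recov (d : dist R SX) := (d x0 - tm x0) / (tp x0 - tm x0).
Definition Vf (p : R) := B + p * (A - B).
Definition Pone y := ((A - c * phit tp y) / lam' - B) / (A - B).
Definition Pzero y := ((B - c * phit tm y) / lam' - B) / (A - B).
Definition pst (p : R) (y : SY) := p * Pone y + (1 - p) * Pzero y.
Definition p0 := - B / (A - B).
Definition s0m := mixd tp tm p0.
Definition sstarm (d : dist R SX) (y : SY) := mixd tp tm (pst (recov d) y).

Lemma AB0 : 0 < A - B.
Proof. by rewrite subr_gt0. Qed.

Lemma p0_01 : 0 <= p0 <= 1.
Proof. apply: frac01; first exact: AB0. have h1 := hB; have h2 := hA; apply/andP; split; lra. Qed.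

Lemma Pone_01 y : 0 <= Pone y <= 1.
Proof.
apply: frac01; first exact: AB0.
have : B <= (A - c * phit tp y) / lam' <= A.
  apply: divbnd => //; have /andP[h1 h2] := Hp y; apply/andP; split; lra.
case/andP => h1 h2; apply/andP; split; lra.
Qed.

Lemma Pzero_01 y : 0 <= Pzero y <= 1.
Proof.
apply: frac01; first exact: AB0.
have : B <= (B - c * phit tm y) / lam' <= A.
  apply: divbnd => //; have /andP[h1 h2] := Hm y; apply/andP; split; lra.
case/andP => h1 h2; apply/andP; split; lra.
Qed.

Lemma pst01 p y : 0 <= p <= 1 -> 0 <= pst p y <= 1.
Proof.
move=> /andP[p0' p1']; have /andP[a1 a2] := Pone_01 y; have /andP[b1 b2] := Pzero_01 y.
rewrite /pst; apply/andP; split; nra.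
Qed.

Lemma recov_of (d : dist R SX) p : (forall a, d a = p * tp a + (1 - p) * tm a) ->
  recov d = p.
Proof.
move=> H; rewrite /recov H.
have hne : tp x0 - tm x0 != 0 by rewrite subr_eq0.
by field; rewrite ?hne ?hl ?hab.
Qed.

Lemma Vf_key p y : 0 <= p <= 1 ->
  Vf p = c * phit (mixd tp tm p) y + lam' * Vf (pst p y).
Proof.
move=> hp; rewrite /phit Ed_mix // /Vf /pst /Pone /Pzero -/(phit tp y) -/(phit tm y).
have hl : lam' != 0 by rewrite lt0r_neq0.
have hab : A - B != 0 by rewrite lt0r_neq0 // AB0.
by field; rewrite ?hne ?hl ?hab.
Qed.

Definition qf (h : hist) := foldl (fun p (z : SX * SY) => pst p z.2) p0 h.

Lemma react_q h : reactive s0m sstarm h = mixd tp tm (qf h) /\ 0 <= qf h <= 1.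
Proof.
elim/last_ind: h => [|h z [IH1 IH2]]; first by split => //; exact: p0_01.
rewrite reactive_rcons /qf foldl_rcons -/(qf h) IH1; split; last exact: pst01.
rewrite /sstarm; congr (mixd _ _ (pst _ _)); apply: recov_of => a.
by rewrite /= /mixf clampE.
Qed.

Lemma two_point_m : two_point s0m sstarm.
Proof.
exists tp, tm, p0, pst; split.
- exact: p0_01.
- by move=> p s; exact: pst01.
- by move=> a; rewrite /s0m /= /mixf clampE //; exact: p0_01.
- move=> p s d hp hd a; rewrite /sstarm (recov_of d p hd) /= /mixf clampE //.
  exact: pst01.
Qed.

Local Notation sXr := (reactive s0m sstarm).

Fixpoint Vs (sY : stY) (g : hist) (n : nat) : R :=
  match n with
  | 0 => Vf (qf g)
  | n'.+1 => E2 sXr sY g (fun a b => Vs sY (rcons g (a, b)) n')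
  end.

Lemma Vs_bnd sY g n : B <= Vs sY g n <= A.
Proof.
elim: n g => [|n IH] g /=; last by apply: E2_bnd => a b; exact: IH.
have [_ /andP[h1 h2]] := react_q g.
have h3 := hAB; rewrite /Vf; apply/andP; split; nra.
Qed.

Lemma tele sY n g : Sr phi c lam' sXr sY g n = Vf (qf g) - lam' ^+ n * Vs sY g n.
Proof.
elim: n g => [|n IH] g /=; first by rewrite expr0 mul1r subrr.
under [X in lam' * X]E2_ext => a b do rewrite IH.
have -> : E2 sXr sY g (fun a b => Vf (qf (rcons g (a, b))) - lam' ^+ n * Vs sY (rcons g (a, b)) n)
  = 1 * E2 sXr sY g (fun a b => Vf (qf (rcons g (a, b)))) + (- lam' ^+ n) *
      E2 sXr sY g (fun a b => Vs sY (rcons g (a, b)) n).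
  by rewrite -E2_lin; apply: E2_ext => a b; ring.
suff <- : c * E2 sXr sY g phi + lam' * E2 sXr sY g (fun a b => Vf (qf (rcons g (a, b))))
   = Vf (qf g) by rewrite exprS; ring.
have [hq hq01] := react_q g.
rewrite -[c * _ + _](E2_lin sXr sY g c lam' phi (fun a b => Vf (qf (rcons g (a, b))))).
rewrite /E2 hq Ed_swap -[RHS](Ed_cst (sY g) (Vf (qf g))); apply: Ed_ext => b.
rewrite (Vf_key (qf g) b hq01) /phit.
have -> : (fun a => c * phi a b + lam' * Vf (qf (rcons g (a, b)))) =
   (fun a => c * phi a b + lam' * (fun _ => Vf (pst (qf g) b)) a).
  by apply: boolp.funext => a; rewrite /qf foldl_rcons.
by rewrite Ed_lin Ed_cst.
Qed.

Lemma Vf_p0 : Vf p0 = 0.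
Proof.
rewrite /Vf /p0; have hab : A - B != 0 by rewrite lt0r_neq0 // AB0.
by field; rewrite ?hne ?hl ?hab.
Qed.

Lemma auto_m : autocratic phi lam' sXr.
Proof.
move=> sY.
have hb : forall n, `|Vs sY [::] n| <= A - B.
  move=> n; have /andP[h1 h2] := Vs_bnd sY [::] n; have h3 := hA; have h4 := hB; rewrite ler_norml; apply/andP; split; lra.
case: ifP => hl.
- have -> : (fun n => \sum_(t < n) (1 - lam') * lam' ^+ t * exp_payoff phi sXr sY t)
        = (fun n => - (lam' ^+ n * Vs sY [::] n)).
    apply: boolp.funext => n; under eq_bigr do rewrite exp_payoffE.
    have hc' : 1 - lam' = c by rewrite hc hl.
    by rewrite SrE hc' tele /qf /= Vf_p0 sub0r.
  apply: (squeeze_cvgr (f := fun n => - ((A - B) * lam' ^+ n)) (h := fun n => (A - B) * lam' ^+ n)).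
  + apply: nearW => n; have := hb n; rewrite ler_norml => /andP[h1 h2].
    have e0 : 0 <= lam' ^+ n by rewrite exprn_ge0 // ltW.
    apply/andP; split; nra.
  + rewrite -oppr0; apply: cvgN; rewrite -(mulr0 (A - B)); apply: (cvgMl_tmp (a := A - B)).
    by apply: cvg_expr; rewrite ger0_norm ?ltW.
  + rewrite -(mulr0 (A - B)); apply: (cvgMl_tmp (a := A - B)).
    by apply: cvg_expr; rewrite ger0_norm ?ltW.
- have l1' : lam' = 1 by apply/eqP; rewrite eq_le l1 /= leNgt hl.
  have c1 : c = 1 by rewrite hc hl.
  have -> : (fun T => T.+1%:R^-1 * \sum_(t < T.+1) exp_payoff phi sXr sY t)
        = (fun T => - (T.+1%:R^-1 * Vs sY [::] T.+1)).
    apply: boolp.funext => n.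
    have -> : \sum_(t < n.+1) exp_payoff phi sXr sY t =
              \sum_(t < n.+1) c * lam' ^+ t * Cr phi sXr sY [::] t.
      by apply: eq_bigr => t _; rewrite exp_payoffE c1 l1' expr1n !mul1r.
    by rewrite SrE tele /qf /= Vf_p0 sub0r l1' expr1n mul1r mulrN.
  apply: (squeeze_cvgr (f := fun n => - ((A - B) * n.+1%:R^-1)) (h := fun n => (A - B) * n.+1%:R^-1)).
  + apply: nearW => n; have := hb n.+1; rewrite ler_norml => /andP[h1 h2].
    have e0 : 0 <= n.+1%:R^-1 :> R by rewrite invr_ge0 ler0n.
    move: (n.+1%:R^-1) (Vs sY [::] n.+1) e0 h1 h2 => x V e0 h1 h2.
    apply/andP; split; nra.
  + rewrite -oppr0; apply: cvgN; rewrite -(mulr0 (A - B)); apply: (cvgMl_tmp (a := A - B)).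
    exact: cvg_harmonic.
  + rewrite -(mulr0 (A - B)); apply: (cvgMl_tmp (a := A - B)).
    exact: cvg_harmonic.
Qed.

End Main.
End Suff.
Arguments phit {R SX SY}.
Arguments zero_suff {R SX SY}.
Arguments s0m {R SX}.
Arguments sstarm {R SX SY}.
Arguments two_point_m {R SX SY}.
Arguments auto_m {R SX SY}.
Arguments nec_main {R SX SY}.
Section Final.
Variables (R : realType) (SX SY : finType).
Local Notation stY := (stratY R SX SY).
Local Notation hist := (history SX SY).

Lemma suff_wrap (phi : SX -> SY -> R) (tp tm : dist R SX) (lam' c A B : R) :
  0 < lam' -> lam' <= 1 -> 0 < c -> c = (if lam' < 1 then 1 - lam' else 1) ->
  B <= 0 -> 0 <= A -> B < A ->
  (forall y, (1 - lam') * A <= c * phit phi tp y <= A - lam' * B) ->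
  (forall y, B - lam' * A <= c * phit phi tm y <= (1 - lam') * B) ->
  exists s0 sstar, two_point s0 sstar /\ autocratic phi lam' (reactive s0 sstar).
Proof.
move=> l0 l1 c0 hc hB hA hAB Hp Hm.
case: (boolp.pselect (exists x0, tp x0 != tm x0)) => [[x0 hx0]|nex].
  exists (s0m tp tm A B), (sstarm phi tp tm x0 lam' c A B); split.
  - by apply: (two_point_m phi tp tm x0 lam' c A B).
  - by apply: (auto_m phi tp tm x0 lam' c A B).
have eq : forall x, tp x = tm x.
  by move=> x; apply/eqP; apply/negPn/negP => h; apply: nex; exists x.
apply: (zero_suff phi tp) => y.
have /andP[h1 _] := Hp y; have /andP[_ h2] := Hm y.
have e : phit phi tm y = phit phi tp y by apply: eq_bigr => x _; rewrite eq.
rewrite e in h2.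
have hl : 0 <= 1 - lam' by rewrite subr_ge0.
have g1 : 0 <= (1 - lam') * A by apply: mulr_ge0.
have g2 : (1 - lam') * B <= 0 by rewrite mulr_ge0_le0.
have : c * phit phi tp y = 0 by apply/eqP; rewrite eq_le; apply/andP; split; lra.
by move/eqP; rewrite mulf_eq0 (negbTE (lt0r_neq0 c0)) => /eqP.
Qed.

Lemma phit_bnd (phi : SX -> SY -> R) (t : dist R SX) y : `|phit phi t y| <= Kphi phi.
Proof. by apply: Ed_norm => a; exact: phi_le_K. Qed.

Lemma suff_one (phi : SX -> SY -> R) (tp tm : dist R SX) :
  (forall y, 0 <= phit phi tp y) -> (forall y, phit phi tm y <= 0) ->
  exists s0 sstar, two_point s0 sstar /\ autocratic phi 1 (reactive s0 sstar).
Proof.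
move=> Hp Hm.
have K0 := Kphi_ge0 phi.
apply: (suff_wrap phi tp tm 1 1 (Kphi phi + 1) 0 ltr01 (lexx 1) ltr01 _ (lexx 0) _ _ _ _).
- by rewrite ltxx.
- lra.
- lra.
- move=> y; have := phit_bnd phi tp y; rewrite ler_norml => /andP[h1 h2].
  have := Hp y => h3; rewrite subrr !mul0r !mul1r ?subr0; apply/andP; split; lra.
- move=> y; have := phit_bnd phi tm y; rewrite ler_norml => /andP[h1 h2].
  have := Hm y => h3; rewrite subrr !mul0r !mul1r; apply/andP; split; lra.
Qed.

Lemma Cr_neg (phi : SX -> SY -> R) sX (sY : stY) g t :
  Cr (fun a b => - phi a b) sX sY g t = - Cr phi sX sY g t.
Proof.
elim: t g => [|t IH] g /=.
  by rewrite -mulN1r -E2_scale; apply: E2_ext => a b; rewrite mulN1r.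
rewrite -mulN1r -E2_scale; apply: E2_ext => a b; by rewrite IH mulN1r.
Qed.

Lemma ces_plus (phi : SX -> SY -> R) (sX : stratX R SX SY) :
  (forall sY : stY, (fun T => T.+1%:R^-1 * \sum_(t < T.+1) exp_payoff phi sX sY t)
      @ \oo --> (0 : R)) ->
  exists tp : dist R SX, forall y, 0 <= phit phi tp y.
Proof.
move=> Hc.
have [tp Htp] : exists tp : dist R SX, forall y,
    (fun _ => 0) y <= \sum_x tp x * phi x y <= (fun _ => Kphi phi) y.
  apply: (@C1 R SX SY phi (fun _ => 0) (fun _ => Kphi phi)) => e e0.
  case: (boolp.pselect (exists t : dist R SX, forall y, - e <= phit phi t y)) => [[t Ht]|nex].
    exists t => y /=; rewrite sub0r Ht /=.
    by have := phit_bnd phi t y; rewrite ler_norml => /andP[].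
  exfalso.
  have hy : forall t : dist R SX, exists y, phit phi t y < - e.
    move=> t; apply: boolp.contrapT => hn; apply: nex; exists t => y.
    rewrite leNgt; apply/negP => hlt; apply: hn; by exists y.
  case: (choice hy) => yf Hyf.
  pose sY : stY := fun h => dirac R (yf (sX h)).
  have Cle : forall g t, Cr phi sX sY g t <= - e.
    move=> g t; elim: t g => [|t IH] g /=.
      rewrite /E2 /sY; under Ed_ext => a do rewrite Ed_dirac.
      exact: ltW (Hyf (sX g)).
    by rewrite -(E2_cst sX sY g (- e)); apply: E2_le => a b; exact: IH.
  have ule : forall T, T.+1%:R^-1 * \sum_(t < T.+1) exp_payoff phi sX sY t <= - e.
    move=> T.
    have hs : \sum_(t < T.+1) exp_payoff phi sX sY t <= \sum_(t < T.+1) (- e).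
      by apply: ler_sum => t _; rewrite exp_payoffE; exact: Cle.
    rewrite sumr_const card_ord in hs.
    have hT : 0 < T.+1%:R :> R by rewrite ltr0n.
    rewrite ler_pdivrMl //; rewrite -mulr_natl in hs; exact: hs.
  have := @cvgr_dist_lt _ _ _ _ _ _ _ (Hc sY) e e0.
  case => N _ HN; have := HN N (leqnn N); rewrite /= sub0r normrN.
  have := ule N; set u := _ * _ => h1 h2.
  have : `|u| >= e by rewrite ler_normr; apply/orP; right; lra.
  lra.
by exists tp => y; have /andP[h _] := Htp y.
Qed.

Lemma ces_minus (phi : SX -> SY -> R) (sX : stratX R SX SY) :
  (forall sY : stY, (fun T => T.+1%:R^-1 * \sum_(t < T.+1) exp_payoff phi sX sY t)
      @ \oo --> (0 : R)) ->
  exists tm : dist R SX, forall y, phit phi tm y <= 0.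
Proof.
move=> Hc.
have Hc' : forall sY : stY, (fun T => T.+1%:R^-1 * \sum_(t < T.+1)
     exp_payoff (fun a b => - phi a b) sX sY t) @ \oo --> (0 : R).
  move=> sY.
  have E : (fun T => T.+1%:R^-1 * \sum_(t < T.+1) exp_payoff (fun a b => - phi a b) sX sY t)
     =1 (fun T => - (T.+1%:R^-1 * \sum_(t < T.+1) exp_payoff phi sX sY t)).
    move=> T /=; rewrite -mulrN -sumrN; congr (_ * _).
    by apply: eq_bigr => t _; rewrite !exp_payoffE Cr_neg.
  rewrite (eq_cvg _ _ E); have := cvgN (Hc sY); rewrite oppr0; exact.
have [tm Htm] := ces_plus (fun a b => - phi a b) sX Hc'.
exists tm => y; have := Htm y; rewrite /phit.
have -> : Ed tm (fun a => - phi a y) = - Ed tm (fun a => phi a y).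
  by rewrite -mulN1r -Ed_scale; apply: Ed_ext => a; rewrite mulN1r.
by rewrite oppr_ge0.
Qed.

End Final.
Lemma hac_of {R : realType} {SX SY : finType} (phi : SX -> SY -> R)
  (sX : stratX R SX SY) (lambda : R) :
  lambda < 1 -> autocratic phi lambda sX ->
  forall sY, Sr phi (1 - lambda) lambda sX sY [::] @ \oo --> (0 : R).
Proof.
move=> hlt Hs sY; have := Hs sY; rewrite hlt.
have E : (fun n => \sum_(t < n) (1 - lambda) * lambda ^+ t * exp_payoff phi sX sY t)
    =1 Sr phi (1 - lambda) lambda sX sY [::].
  by move=> n /=; under eq_bigr do rewrite exp_payoffE; rewrite SrE.
by rewrite (eq_cvg _ _ E).
Qed.

Lemma root_zero {R : realType} {SX SY : finType} (phi : SX -> SY -> R)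
  (sX : stratX R SX SY) :
  autocratic phi 0 sX -> forall y, phit phi (sX [::]) y = 0.
Proof.
move=> Hs y.
pose sY : stratY R SX SY := fun _ => dirac R y.
have Hac := hac_of phi sX 0 ltr01 Hs sY.
move: Hac; rewrite -cvg_shiftS.
have E : [sequence Sr phi (1 - 0) 0 sX sY [::] n.+1]_n =1 (fun _ => phit phi (sX [::]) y).
  move=> n /=; rewrite mul0r addr0 subr0 mul1r /E2 /phit.
  by apply: Ed_ext => a; rewrite Ed_dirac.
rewrite (eq_cvg _ _ E) => h.
apply/eqP; rewrite -normr_le0; apply/ler_addgt0Pr => e e0; rewrite add0r.
have := @cvgr_dist_lt _ _ _ _ _ _ _ h e e0.
case => N _ HN; have := HN N (leqnn N); rewrite /= sub0r normrN => h1.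
exact: ltW.
Qed.

Arguments ces_plus {R SX SY}.
Arguments ces_minus {R SX SY}.
Arguments suff_one {R SX SY}.
Arguments suff_wrap {R SX SY}.

Theorem proposition8 (R : realType) (SX SY : finType)
  (hSX : (0 < #|SX|)%N) (hSY : (0 < #|SY|)%N)
  (phi : SX -> SY -> R) (lambda : R) (hl : 0 <= lambda <= 1) :
  (exists sX : stratX R SX SY, autocratic phi lambda sX) ->
  forall lambda' : R, lambda <= lambda' <= 1 ->
  exists (s0 : dist R SX) (sstar : dist R SX -> SY -> dist R SX),
    two_point s0 sstar /\ autocratic phi lambda' (reactive s0 sstar).
Proof.
move=> [sX Hs] lam' /andP[hll' hl'1].
case/card_gt0P: hSY => y0 _.
have /andP[hl0 hl1] := hl.
move: hl0; rewrite le0r => /orP[/eqP l0|l0].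
  subst lambda; exact: (zero_suff phi (sX [::]) lam' (root_zero phi sX Hs)).
case: (boolP (lambda < 1)) => hlt; last first.
  have l1 : lambda = 1 by apply/eqP; rewrite eq_le hl1 /= leNgt.
  have l1' : lam' = 1 by apply/eqP; rewrite eq_le hl'1 /= -l1.
  subst lam'.
  have Hc : forall sY, (fun T => T.+1%:R^-1 * \sum_(t < T.+1) exp_payoff phi sX sY t)
      @ \oo --> (0 : R).
    by move=> sY; have := Hs sY; rewrite (negbTE hlt).
  have [tp Htp] := ces_plus phi sX Hc.
  have [tm Htm] := ces_minus phi sX Hc.
  exact: (suff_one phi tp tm Htp Htm).
have Hac := hac_of phi sX lambda hlt Hs.
have [tp [tm [M [m [/andP[hm0 h0M] Hy]]]]] := nec_main phi sX lambda y0 l0 hlt Hac.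
have c0 : 0 < 1 - lambda by rewrite subr_gt0.
have aM : forall y, M <= phit phi tp y.
  by move=> y; have [h _ _ _] := Hy y; rewrite ler_pM2l in h.
have bm : forall y, phit phi tm y <= m.
  by move=> y; have [_ _ _ h] := Hy y; rewrite ler_pM2l in h.
case: (boolP (lam' < 1)) => hlt'; last first.
  have l1' : lam' = 1 by apply/eqP; rewrite eq_le hl'1 /= leNgt.
  subst lam'.
  apply: (suff_one phi tp tm) => y.
  - by apply: le_trans (aM y).
  - by apply: le_trans (bm y) _.
case: (boolP (m < M)) => hmM; last first.
  have hMm : M <= m by rewrite leNgt.
  have eM : M = 0 by lra.
  have em : m = 0 by lra.
  apply: (zero_suff phi tp lam') => y.
  have [_ h _ _] := Hy y; have := aM y; rewrite eM em in h *.
  move: h; rewrite /phit; set a := Ed tp _ => h1 h2.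
  have : (1 - lambda) * a <= 0 by move: h1; rewrite mulr0 subr0.
  rewrite pmulr_rle0 // => h3; apply/eqP; rewrite eq_le h3 h2.
  by [].
have l0' : 0 < lam' by apply: lt_le_trans hll'.
apply: (suff_wrap phi tp tm lam' (1 - lam') M m l0' hl'1) => //.
- by rewrite subr_gt0.
- by rewrite hlt'.
- move=> y; have [h1 h2 h3 h4] := Hy y; have h5 := aM y.
  move: h1 h2 h3 h4 h5; rewrite /phit; set a := Ed tp _ => h1 h2 h3 h4 h5.
  have h6 : 0 <= lam' - lambda by rewrite subr_ge0.
  have h7 : m <= a by apply: le_trans h5; apply: le_trans h0M.
  apply/andP; split; nra.
- move=> y; have [h1 h2 h3 h4] := Hy y; have h5 := bm y.
  move: h1 h2 h3 h4 h5; rewrite /phit; set b := Ed tm _ => h1 h2 h3 h4 h5.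
  have h6 : 0 <= lam' - lambda by rewrite subr_ge0.
  have h7 : b <= M by apply: le_trans h5 _; apply: le_trans h0M.
  apply/andP; split; nra.
Qed.
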